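(* Let $(R,\mathfrak{m})$ be a Noetherian local ring and let $\varphi$ be a self-map of finite length of $R$. Then for every $n\geq 1$ the map $\varphi^n$ is of finite length, and the sequence $\{(\log\lambda(\varphi^n))/n\}_{n\geq1}$ converges, and its limit equals $\inf_{n\geq1}(\log\lambda(\varphi^n))/n$.
   Context: All rings are Noetherian, commutative, with identity. A self-map of a ring is a ring endomorphism; $\varphi^n$ denotes the $n$-fold composition. A homomorphism $f:(R,\mathfrak{m})\to(S,\mathfrak{n})$ of Noetherian local rings is of finite length if it is local and $f(\mathfrak{m})S$ is $\mathfrak{n}$-primary; its length is $\lambda(f):=\ell_S(S/f(\mathfrak{m})S)$. A self-map of finite length of $R$ is an endomorphism of $R$ which is a homomorphism of finite length $R\to R$. *)

(* Defs.v *)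
From HB Require Import structures.
From mathcomp Require Import all_boot all_algebra.
Set Implicit Arguments. Unset Strict Implicit. Unset Printing Implicit Defensive.
Import GRing.Theory.

Section CommAlg.
Local Open Scope ring_scope.

Definition is_ideal (R : comNzRingType) (I : R -> Prop) : Prop :=
  I 0 /\ (forall x y, I x -> I y -> I (x + y)) /\ (forall r x, I x -> I (r * x)).

Definition subideal (R : comNzRingType) (I J : R -> Prop) : Prop :=
  forall x, I x -> J x.

Definition noetherian (R : comNzRingType) : Prop :=
  forall J : nat -> (R -> Prop),
    (forall n, is_ideal (J n)) ->
    (forall n, subideal (J n) (J n.+1)) ->
    exists N, forall n, (N <= n)%N -> forall x, J n x <-> J N x.

Definition local_ring (R : comNzRingType) (m : R -> Prop) : Prop :=
  is_ideal m /\ ~ m 1 /\ (forall x, ~ m x -> exists y, x * y = 1).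

Definition noetherian_local (R : comNzRingType) (m : R -> Prop) : Prop :=
  noetherian R /\ local_ring m.

(** The ideal f(I)S of S generated by the image of I under f : R -> S
    (intersection of all ideals of S containing f(I)). *)
Definition ext_ideal (R S : comNzRingType) (f : R -> S) (I : R -> Prop) : S -> Prop :=
  fun x => forall J : S -> Prop, is_ideal J -> (forall y, I y -> J (f y)) -> J x.

Definition radical (S : comNzRingType) (q : S -> Prop) : S -> Prop :=
  fun x => exists k : nat, q (x ^+ k).

Definition primary (S : comNzRingType) (q : S -> Prop) : Prop :=
  is_ideal q /\ ~ q 1 /\
  (forall x y, q (x * y) -> ~ q x -> exists k : nat, q (y ^+ k)).

Definition primary_to (S : comNzRingType) (n q : S -> Prop) : Prop :=
  primary q /\ (forall x, radical q x <-> n x).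

Definition local_hom (R S : comNzRingType) (m : R -> Prop) (n : S -> Prop)
    (f : R -> S) : Prop :=
  forall x, m x -> n (f x).

(** A ring homomorphism f is of finite length: local, and f(m)S is n-primary.
    (Being a ring homomorphism is imposed separately, e.g. by f being an
    rmorphism, or an iterate of one.) *)
Definition finite_length_hom (R S : comNzRingType) (m : R -> Prop) (n : S -> Prop)
    (f : R -> S) : Prop :=
  local_hom m n f /\ primary_to n (ext_ideal f m).

(** Submodules of S/I are the ideals of S
    containing I, so a strict chain of submodules of length k is a chain
    J_0 < J_1 < ... < J_k of ideals of S containing I (strict inclusions). *)
Definition quot_chain (S : comNzRingType) (I : S -> Prop) (k : nat)
    (J : nat -> (S -> Prop)) : Prop :=
  (forall i, (i <= k)%N -> is_ideal (J i) /\ subideal I (J i)) /\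
  (forall i, (i < k)%N -> subideal (J i) (J i.+1) /\ ~ subideal (J i.+1) (J i)).

Definition quot_length (S : comNzRingType) (I : S -> Prop) (l : nat) : Prop :=
  (exists J, quot_chain I l J) /\
  (forall k J, quot_chain I k J -> (k <= l)%N).

End CommAlg.

From Stdlib Require Import Reals.

Definition is_inf (E : R -> Prop) (l : R) : Prop :=
  (forall x, E x -> Rle l x) /\
  (forall b, (forall x, E x -> Rle b x) -> Rle b l).

(* Main.v *)
Require Import Defs.
From Stdlib Require Import Reals Lra Lia Classical.

Section Fek.
Local Open Scope R_scope.

Lemma ln_le' x y : 0 < x -> x <= y -> ln x <= ln y.
Proof.
intros hx [h|h]; [left; apply ln_increasing; auto | rewrite h; right; reflexivity].
Qed.

Variable lam : nat -> nat.
Hypothesis hpos : forall n, (1 <= n)%nat -> (1 <= lam n)%nat.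
Hypothesis hsub : forall a b, (1 <= a)%nat -> (1 <= b)%nat -> (lam (a + b) <= lam a * lam b)%nat.

Definition u n := ln (INR (lam n)).

Lemma INR_lam_pos n : (1 <= n)%nat -> 1 <= INR (lam n).
Proof. intro h; apply (le_INR 1); auto. Qed.

Lemma u_nonneg n : (1 <= n)%nat -> 0 <= u n.
Proof. intro h; unfold u; rewrite <- ln_1; apply ln_le'; [lra|apply INR_lam_pos; auto]. Qed.

Lemma u_sub a b : (1 <= a)%nat -> (1 <= b)%nat -> u (a + b) <= u a + u b.
Proof.
intros ha hb; unfold u.
rewrite <- ln_mult; try (pose proof (INR_lam_pos a ha); pose proof (INR_lam_pos b hb); lra).
apply ln_le'.
- pose proof (INR_lam_pos (a+b) ltac:(lia)); lra.
- rewrite <- mult_INR; apply le_INR; auto.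
Qed.

Lemma u_lin r : (1 <= r)%nat -> u r <= INR r * u 1.
Proof.
induction r as [|r IH]; intro h; [lia|].
destruct r as [|r]; [simpl; lra|].
replace (S (S r)) with (1 + S r)%nat by lia.
pose proof (u_sub 1 (S r) ltac:(lia) ltac:(lia)).
specialize (IH ltac:(lia)).
rewrite plus_INR; simpl INR at 1; lra.
Qed.

Lemma u_q q p r : (1 <= p)%nat -> (1 <= r)%nat -> u (q * p + r) <= INR q * u p + u r.
Proof.
intros hp hr; induction q as [|q IH]; [simpl; lra|].
replace (S q * p + r)%nat with (p + (q * p + r))%nat by lia.
pose proof (u_sub p (q*p+r) hp ltac:(lia)).
rewrite S_INR; lra.
Qed.

Lemma u_bound n p : (1 <= n)%nat -> (1 <= p)%nat ->
  u n / INR n <= u p / INR p + INR p * u 1 / INR n.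
Proof.
intros hn hp.
set (q := ((n - 1) / p)%nat). set (r := ((n - 1) mod p + 1)%nat).
assert (hp0 : (p <> 0)%nat) by lia.
pose proof (Nat.div_mod (n - 1) p hp0) as hdm.
pose proof (Nat.mod_upper_bound (n - 1) p hp0) as hmu.
assert (hn' : n = (q * p + r)%nat) by (unfold q, r; lia).
assert (hr1 : (1 <= r)%nat) by (unfold r; lia).
assert (hrp : (r <= p)%nat) by (unfold r; lia).
assert (hqp : (q * p <= n)%nat) by lia.
pose proof (u_q q p r hp hr1) as h1. rewrite <- hn' in h1.
pose proof (u_lin r hr1) as h2.
pose proof (u_nonneg p hp) as hU. pose proof (u_nonneg 1 (le_n 1)) as hV.
apply le_INR in hrp. apply le_INR in hqp. rewrite mult_INR in hqp.
assert (hP : 1 <= INR p) by (apply (le_INR 1); auto).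
assert (hN : 1 <= INR n) by (apply (le_INR 1); auto).
set (W := u p / INR p).
assert (hW : u p = W * INR p) by (unfold W; field; lra).
assert (hW0 : 0 <= W) by (unfold W; apply Rmult_le_pos; [lra| left; apply Rinv_0_lt_compat; lra]).
assert (key : u n <= INR n * W + INR p * u 1).
{ rewrite hW in h1. pose proof (pos_INR q). nra. }
replace (W + INR p * u 1 / INR n) with ((INR n * W + INR p * u 1) / INR n) by (field; lra).
unfold Rdiv; apply Rmult_le_compat_r; [left; apply Rinv_0_lt_compat; lra| exact key].
Qed.

Definition Eset x := exists n, (0 < n)%nat /\ x = u n / INR n.

Lemma fekete : exists l,
  Un_cv (fun k => u (S k) / INR (S k)) l /\
  ((forall x, Eset x -> l <= x) /\ (forall b, (forall x, Eset x -> b <= x) -> b <= l)).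
Proof.
set (E' := fun y => Eset (- y)).
assert (hb : bound E').
{ exists 0; intros y [n [hn e]].
  assert (0 <= u n / INR n).
  { pose proof (u_nonneg n ltac:(lia)). apply Rmult_le_pos; auto.
    left; apply Rinv_0_lt_compat; apply lt_0_INR; lia. }
  lra. }
assert (hne : exists y, E' y).
{ exists (- (u 1 / INR 1)); unfold E', Eset; exists 1%nat; split; [lia|ring]. }
destruct (completeness E' hb hne) as [m [hm1 hm2]].
assert (hinf1 : forall x, Eset x -> - m <= x).
{ intros x hx. assert (E' (- x)) by (unfold E'; rewrite Ropp_involutive; auto).
  pose proof (hm1 _ H); lra. }
assert (hinf2 : forall b, (forall x, Eset x -> b <= x) -> b <= - m).
{ intros b hbx. assert (m <= - b).
  { apply hm2; intros y hy; pose proof (hbx _ hy); lra. }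
  lra. }
exists (- m); split; [|split; auto].
intros eps heps.
assert (hp : exists p, (1 <= p)%nat /\ u p / INR p < - m + eps / 2).
{ apply NNPP; intro hno.
  assert (- m + eps / 2 <= - m); [|lra].
  apply hinf2; intros x [n [hn ->]].
  apply Rnot_lt_le; intro hlt; apply hno; exists n; split; [lia|lra]. }
destruct hp as [p [hp1 hp2]].
destruct (INR_archimed (eps / 2) (INR p * u 1) ltac:(lra)) as [N hN].
exists N; intros k hk.
unfold R_dist.
assert (hlow : - m <= u (S k) / INR (S k)) by (apply hinf1; exists (S k); split; [lia|auto]).
pose proof (u_bound (S k) p ltac:(lia) hp1) as hub.
assert (hSk : INR N <= INR (S k)) by (apply le_INR; lia).
assert (hS0 : 0 < INR (S k)) by (apply lt_0_INR; lia).
assert (hsmall : INR p * u 1 / INR (S k) < eps / 2).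
{ apply (Rmult_lt_reg_r (INR (S k))); auto.
  replace (INR p * u 1 / INR (S k) * INR (S k)) with (INR p * u 1) by (field; lra).
  nra. }
rewrite Rabs_right; lra.
Qed.

End Fek.

From HB Require Import structures.
From mathcomp Require Import all_boot all_algebra zify.
From Stdlib Require Import Reals FunctionalExtensionality PropExtensionality Classical ClassicalEpsilon.
Set Implicit Arguments. Unset Strict Implicit. Unset Printing Implicit Defensive.
Import GRing.Theory.

Section AllAlg.
Local Open Scope ring_scope.

Lemma set_ext (A : Type) (X Y : A -> Prop) : (forall x, X x <-> Y x) -> X = Y.
Proof. move=> h; apply: functional_extensionality => x; apply: propositional_extensionality; exact: h. Qed.

Section Alg.
Implicit Types (A B : comNzRingType).

Lemma idl0 A (I : A -> Prop) : is_ideal I -> I 0.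
Proof. by case. Qed.
Lemma idlD A (I : A -> Prop) x y : is_ideal I -> I x -> I y -> I (x + y).
Proof. by case=> _ [h _]; apply: h. Qed.
Lemma idlM A (I : A -> Prop) r x : is_ideal I -> I x -> I (r * x).
Proof. by case=> _ [_ h]; apply: h. Qed.
Lemma idlMr A (I : A -> Prop) r x : is_ideal I -> I x -> I (x * r).
Proof. by move=> hI hx; rewrite mulrC; apply: idlM. Qed.
Lemma idlN A (I : A -> Prop) x : is_ideal I -> I x -> I (- x).
Proof. by move=> hI hx; rewrite -mulN1r; apply: idlM. Qed.
Lemma idlB A (I : A -> Prop) x y : is_ideal I -> I x -> I y -> I (x - y).
Proof. by move=> hI hx hy; apply: idlD => //; apply: idlN. Qed.
Lemma idl1 A (I : A -> Prop) x : is_ideal I -> I 1 -> I x.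
Proof. by move=> hI h1; rewrite -(mulr1 x); apply: idlM. Qed.

Lemma ext_ideal_ideal A B (f : A -> B) (I : A -> Prop) : is_ideal (ext_ideal f I).
Proof.
split; first by move=> J hJ _; apply: idl0.
split; first by move=> x y hx hy J hJ hf; apply: idlD => //; [apply: hx|apply: hy].
by move=> r x hx J hJ hf; apply: idlM => //; apply: hx.
Qed.
Lemma ext_ideal_gen A B (f : A -> B) (I : A -> Prop) y : I y -> ext_ideal f I (f y).
Proof. by move=> hy J hJ hf; apply: hf. Qed.
Lemma ext_ideal_min A B (f : A -> B) (I : A -> Prop) (J : B -> Prop) :
  is_ideal J -> (forall y, I y -> J (f y)) -> subideal (ext_ideal f I) J.
Proof. by move=> hJ hf x hx; apply: hx. Qed.
Lemma ext_ideal_mono A B (f : A -> B) (I I' : A -> Prop) :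
  subideal I I' -> subideal (ext_ideal f I) (ext_ideal f I').
Proof.
move=> hI x hx; apply: hx; first exact: ext_ideal_ideal.
by move=> y hy; apply: ext_ideal_gen; apply: hI.
Qed.

End Alg.

Section Chains.
Implicit Types (A B : comNzRingType).

Definition bchain A (I J : A -> Prop) k (C : nat -> A -> Prop) :=
  quot_chain I k C /\ (forall i, (i <= k)%nat -> subideal (C i) J).
Definition lenle A (I J : A -> Prop) n := forall k C, bchain I J k C -> (k <= n)%nat.

Lemma lenle_mono A (I I' J J' : A -> Prop) n :
  subideal I' I -> subideal J J' -> lenle I' J' n -> lenle I J n.
Proof.
move=> hI hJ hl k C [[h1 h2] h3]; apply: (hl k C); split; last first.
  by move=> i hi x hx; apply: hJ; apply: (h3 i hi).
split=> // i hi; have [a b] := h1 i hi; split=> // x hx; exact: b _ (hI _ hx).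
Qed.

Definition preC A (X : A -> Prop) (C : nat -> A -> Prop) :=
  fun i => if i is i'.+1 then C i' else X.
Definition extC A (C : nat -> A -> Prop) p (X : A -> Prop) :=
  fun i => if (i <= p)%nat then C i else X.

Lemma bchain_pre A (I J X : A -> Prop) k C :
  bchain I J k C -> is_ideal X -> subideal I X -> subideal X J ->
  subideal X (C 0%nat) -> ~ subideal (C 0%nat) X -> bchain I J k.+1 (preC X C).
Proof.
move=> [[h1 h2] h3] hX hIX hXJ hXC hCX; split; first split.
- by case=> [|i] /= hi //; apply: h1.
- by case=> [|i] /= hi //; apply: h2.
- by case=> [|i] /= hi //; apply: h3.
Qed.

Lemma bchain_ext A (I J X : A -> Prop) p C :
  bchain I J p C -> is_ideal X -> subideal I X -> subideal X J ->
  subideal (C p) X -> ~ subideal X (C p) -> bchain I J p.+1 (extC C p X).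
Proof.
move=> [[h1 h2] h3] hX hIX hXJ hXC hCX; rewrite /extC; split; first split.
- by move=> i hi; case: ifP => // hip; apply: h1.
- move=> i hi; case: (ltnP i p) => hip.
    by rewrite (ltnW hip); apply: h2.
  have -> : i = p by lia.
  by rewrite leqnn.
- by move=> i hi; case: ifP => // hip; apply: h3.
Qed.

Lemma lenle_pre A (I J K : A -> Prop) n :
  is_ideal I -> is_ideal K -> subideal I K -> ~ subideal K I -> subideal K J ->
  lenle I J n.+1 -> lenle K J n.
Proof.
move=> hI hK hIK hKI hKJ hl k C hC.
have hb : bchain I J k.+1 (preC I C).
  have [[h1 _] _] := hC.
  apply: bchain_pre.
  - case: hC => [[h1' h2'] h3']; split; first split => // i hi.
    have [a b] := h1' i hi; split=> // x hx; exact: b _ (hIK _ hx).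
    exact: h3'.
  - exact: hI.
  - by move=> x.
  - by move=> x hx; apply: hKJ; apply: hIK.
  - by move=> x hx; apply: (h1 0%nat (leq0n _)).2; apply: hIK.
  - move=> hs; apply: hKI => x hx; apply: hs; exact: (h1 0%nat (leq0n _)).2.
by have := hl _ _ hb.
Qed.

End Chains.

Section Sub.
Implicit Types (A B : comNzRingType).

Definition capI A (X Y : A -> Prop) := fun x => X x /\ Y x.
Definition sumI A (X Y : A -> Prop) := fun z => exists a b, X a /\ Y b /\ z = a + b.

Lemma capI_ideal A (X Y : A -> Prop) : is_ideal X -> is_ideal Y -> is_ideal (capI X Y).
Proof.
move=> hX hY; split; first by split; apply: idl0.
split; first by move=> x y [? ?] [? ?]; split; apply: idlD.
by move=> r x [? ?]; split; apply: idlM.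
Qed.

Lemma sumI_ideal A (X Y : A -> Prop) : is_ideal X -> is_ideal Y -> is_ideal (sumI X Y).
Proof.
move=> hX hY; split; first by exists 0, 0; rewrite addr0; split; [apply: idl0|split; [apply: idl0|]].
split.
  move=> x y [a [b [ha [hb ->]]]] [c [d [hc [hd ->]]]].
  exists (a + c), (b + d); split; first exact: idlD.
  by split; [exact: idlD| rewrite addrACA].
move=> r x [a [b [ha [hb ->]]]]; exists (r * a), (r * b).
by split; [exact: idlM|split; [exact: idlM|rewrite mulrDr]].
Qed.

Lemma bchain_restr A (I J : A -> Prop) k C : bchain I J k.+1 C -> bchain I J k C.
Proof.
move=> [[h1 h2] h3]; split; first split.
- by move=> i hi; apply: h1; apply: leqW.
- by move=> i hi; apply: h2; apply: ltnW.
- by move=> i hi; apply: h3; apply: leqW.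
Qed.

Lemma step_comp A (P Q : A -> Prop) p (C1 : nat -> A -> Prop) (Xo Xn : A -> Prop) :
  bchain P Q p C1 -> C1 p = Xo -> subideal Xo Xn -> is_ideal Xn ->
  subideal P Xn -> subideal Xn Q ->
  exists p' C1', bchain P Q p' C1' /\ C1' p' = Xn /\ (p <= p')%nat /\
     (~ subideal Xn Xo -> (p < p')%nat).
Proof.
move=> hb hp hon hn hPn hnQ.
case: (classic (subideal Xn Xo)) => hno.
  exists p, C1; split=> //; split; last by split.
  by rewrite hp; apply: set_ext => x; split; [apply: hon|apply: hno].
exists p.+1, (extC C1 p Xn); split.
  by apply: bchain_ext => //; rewrite hp.
by rewrite /extC ltnn; split=> //; split.
Qed.

Lemma split_chain A (I K J : A -> Prop) k C :
  is_ideal I -> is_ideal K -> is_ideal J -> subideal I K -> subideal K J ->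
  bchain I J k C ->
  exists p q C1 C2, bchain I K p C1 /\ bchain K J q C2 /\
    C1 p = capI (C k) K /\ C2 q = sumI (C k) K /\ (k <= p + q)%nat.
Proof.
move=> hI hK hJ hIK hKJ; elim: k C => [|k IH] C hC.
  have [[h1 _] h3] := hC.
  have [hC0 hIC0] := h1 0%nat (leqnn _).
  exists 0%nat, 0%nat, (fun _ => capI (C 0%nat) K), (fun _ => sumI (C 0%nat) K).
  split; first split; first split.
  - move=> i _; split; first exact: capI_ideal.
    by move=> x hx; split; [apply: hIC0|apply: hIK].
  - by move=> i.
  - by move=> i _ x [].
  split; last by [].
  split; first split.
  - move=> i _; split; first exact: sumI_ideal.
    by move=> x hx; exists 0, x; rewrite add0r; split; [apply: idl0|].
  - by move=> i.
  - move=> i _ x [a [b [ha [hb ->]]]]; apply: idlD => //; last exact: hKJ.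
    exact: (h3 0%nat (leqnn _)).
have [p [q [C1 [C2 [hb1 [hb2 [e1 [e2 hk]]]]]]]] := IH C (bchain_restr hC).
have [[h1 h2] h3] := hC.
have [hsub hstr] := h2 k (leqnn _).
have [hCk1 hICk1] := h1 k.+1 (leqnn _).
have [hCk hICk] := h1 k (leqnSn k).
have [p' [C1' [hb1' [e1' [hp1 hp2]]]]] :=
  step_comp (Xn := capI (C k.+1) K) hb1 e1
    (fun x hx => conj (hsub _ hx.1) hx.2) (capI_ideal hCk1 hK)
    (fun x hx => conj (hICk1 _ hx) (hIK _ hx)) (fun x hx => hx.2).
have s1 : subideal (sumI (C k) K) (sumI (C k.+1) K).
  by move=> x [a [b [ha [hb e]]]]; exists a, b; split; [apply: hsub|].
have s2 : subideal K (sumI (C k.+1) K).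
  move=> x hx; exists 0, x; rewrite add0r; split=> //; apply: idl0.
  by have [] := h1 k.+1 (leqnn _).
have s3 : subideal (sumI (C k.+1) K) J.
  move=> x [a [b [ha [hb ->]]]]; apply: idlD => //; last exact: hKJ.
  exact: (h3 k.+1 (leqnn _)).
have [q' [C2' [hb2' [e2' [hq1 hq2]]]]] :=
  step_comp hb2 e2 s1 (sumI_ideal hCk1 hK) s2 s3.
exists p', q', C1', C2'; do 4 (split => //).
case: (classic (subideal (capI (C k.+1) K) (capI (C k) K))) => hA; last first.
  by have := hp2 hA; lia.
case: (classic (subideal (sumI (C k.+1) K) (sumI (C k) K))) => hB; last first.
  by have := hq2 hB; lia.
exfalso; apply: hstr => x hx.
have [a [b [ha [hb ex]]]] : sumI (C k) K x by apply: hB; exists x, 0; rewrite addr0; split=> //; split=> //; apply: idl0.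
have hbk : capI (C k.+1) K b.
  split=> //; have -> : b = x - a by rewrite ex addrAC subrr add0r.
  by apply: idlB => //; apply: hsub.
have [hb' _] := hA _ hbk.
by rewrite ex; apply: idlD.
Qed.

Lemma lenle_add A (I K J : A -> Prop) a b :
  is_ideal I -> is_ideal K -> is_ideal J -> subideal I K -> subideal K J ->
  lenle I K a -> lenle K J b -> lenle I J (a + b).
Proof.
move=> hI hK hJ hIK hKJ ha hb k C hC.
have [p [q [C1 [C2 [hb1 [hb2 [_ [_ hk]]]]]]]] := split_chain hI hK hJ hIK hKJ hC.
have := ha _ _ hb1; have := hb _ _ hb2; lia.
Qed.

End Sub.

Section Cyc.
Implicit Types (A B : comNzRingType).

Definition fullI A := fun _ : A => True.
Definition colon A (X : A -> Prop) (x : A) := fun a => X (a * x).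
Definition cyc A (X : A -> Prop) (x : A) := fun z => exists c a, X c /\ z = c + a * x.

Lemma colon_ideal A (X : A -> Prop) x : is_ideal X -> is_ideal (colon X x).
Proof.
move=> hX; split; first by rewrite /colon mul0r; apply: idl0.
split; first by move=> a b ha hb; rewrite /colon mulrDl; apply: idlD.
by move=> r a ha; rewrite /colon -mulrA; apply: idlM.
Qed.

Lemma cyc_ideal A (X : A -> Prop) x : is_ideal X -> is_ideal (cyc X x).
Proof.
move=> hX; split; first by exists 0, 0; rewrite mul0r addr0; split=> //; apply: idl0.
split.
  move=> u v [a [b [ha ->]]] [c [d [hc ->]]].
  exists (a + c), (b + d); split; first exact: idlD.
  by rewrite mulrDl addrACA.
move=> r u [a [b [ha ->]]]; exists (r * a), (r * b).
by split; [exact: idlM| rewrite mulrDr mulrA].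
Qed.

Lemma full_ideal A : is_ideal (@fullI A).
Proof. by []. Qed.

Lemma lenle_weaken A (I J : A -> Prop) n n' : (n <= n')%nat -> lenle I J n -> lenle I J n'.
Proof. by move=> h hl k C hC; apply: leq_trans (hl _ _ hC) h. Qed.

Lemma lenle_triv A (I J : A -> Prop) : subideal J I -> lenle I J 0.
Proof.
move=> hJI [|k] C [[h1 h2] h3] //.
have [_ hs] := h2 0%nat (ltn0Sn _); exfalso; apply: hs => x hx.
apply: (h1 0%nat (leq0n _)).2; apply: hJI; exact: (h3 1%nat (ltn0Sn _)).
Qed.

Lemma lenle_cyc A (K N J : A -> Prop) x n :
  is_ideal K -> is_ideal N -> (forall a, N a -> K (a * x)) ->
  subideal J (cyc K x) -> lenle N (@fullI A) n -> lenle K J n.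
Proof.
move=> hK hN hNK hJ hl k C [[h1 h2] h3]; apply: (hl k (fun i => colon (C i) x)).
split; last by [].
split.
  move=> i hi; have [hCi hKC] := h1 i hi; split; first exact: colon_ideal.
  by move=> a ha; apply: hKC; apply: hNK.
move=> i hi; have [hs hns] := h2 i hi; split.
  by move=> a ha; apply: hs.
move=> hc; apply: hns => y hy.
have [c [a [hc' ey]]] := hJ _ (h3 i.+1 hi _ hy).
have hCi := (h1 i (ltnW hi)).1.
have hCi1 := (h1 i.+1 hi).1.
have hcC : C i c by apply: (h1 i (ltnW hi)).2.
have hax : C i.+1 (a * x).
  have -> : a * x = y - c by rewrite ey addrAC subrr add0r.
  by apply: idlB => //; apply: hs.
have := hc a hax; rewrite /colon => haxi.
by rewrite ey; apply: idlD.
Qed.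

Lemma max_nat (P : nat -> Prop) n :
  (exists k, P k) -> (forall k, P k -> (k <= n)%nat) ->
  exists k, P k /\ forall j, P j -> (j <= k)%nat.
Proof.
elim: n => [|n IH] hex hb.
  have [k hk] := hex; exists k; split=> // j hj; have := hb _ hj; lia.
case: (classic (P n.+1)) => hn.
  by exists n.+1; split.
apply: IH => // k hk; have := hb _ hk; rewrite leq_eqVlt; case/orP => [/eqP e|]; [by subst; case: hn|by []].
Qed.

Lemma bchain_shift A (I J : A -> Prop) k C :
  bchain I J k.+1 C -> bchain I J k (fun i => C i.+1).
Proof.
move=> [[h1 h2] h3]; split; first split.
- by move=> i hi; apply: h1.
- by move=> i hi; apply: h2.
- by move=> i hi; apply: h3.
Qed.

End Cyc.

Section Main5.
Implicit Types (A B : comNzRingType).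

Lemma not_sub_ex A (X Y : A -> Prop) : ~ subideal X Y -> exists x, X x /\ ~ Y x.
Proof.
move=> h; apply: NNPP => hn; apply: h => x hx; apply: NNPP => hy; apply: hn; by exists x.
Qed.

Lemma unit_out A (m : A -> Prop) (I : A -> Prop) y a :
  local_ring m -> is_ideal I -> m a -> I (y - a * y) -> I y.
Proof.
move=> [hm [h1 hu]] hI ha hy.
have hna : ~ m (1 - a).
  move=> h; apply: h1; have -> : (1 : A) = (1 - a) + a by rewrite subrK.
  exact: idlD.
have [u hu'] := hu _ hna.
have -> : y = u * (y - a * y) by rewrite -{2}(mul1r y) -mulrBl mulrA (mulrC u) hu' mul1r.
exact: idlM.
Qed.

Lemma bchain2 A (I J : A -> Prop) : is_ideal I -> is_ideal J -> subideal I J -> ~ subideal J I ->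
  bchain I J 1 (fun i => if i is 0%nat then I else J).
Proof.
move=> hI hJ hIJ hJI; split; first split.
- by case=> [|[|]] //= _; split=> //; move=> x.
- by case=> [|[|]] //= _; split.
- by case=> [|[|]] //= _ x.
Qed.

Lemma main5 A (m : A -> Prop) (psi : A -> A) L :
  local_ring m ->
  (forall x y, psi (x + y) = psi x + psi y) ->
  (forall x y, psi (x * y) = psi x * psi y) ->
  lenle (ext_ideal psi m) (@fullI A) L ->
  forall n (I J : A -> Prop), is_ideal I -> is_ideal J -> subideal I J -> lenle I J n ->
  lenle (ext_ideal psi I) (ext_ideal psi J) (n * L).
Proof.
move=> hm hadd hmul hL; elim=> [|n IH] I J hI hJ hIJ hl.
  case: (classic (subideal J I)) => hJI.
    by rewrite mul0n; apply: lenle_triv; apply: ext_ideal_mono.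
  by have := hl _ _ (bchain2 hI hJ hIJ hJI).
case: (classic (subideal J I)) => hJI.
  by apply: (lenle_weaken (leq0n _)); apply: lenle_triv; apply: ext_ideal_mono.
have hb1 := bchain2 hI hJ hIJ hJI.
have [k0 [[C hC] hmax]] := max_nat (P := fun k => exists C, bchain I J k C) (ex_intro _ 1%nat (ex_intro _ _ hb1)) (fun k '(ex_intro C hC) => hl k C hC).
have hk0 : (1 <= k0)%nat by apply: hmax; exists (fun i => if i is 0%nat then I else J).
have [k0' ek] : exists k', k0 = k'.+1 by case: k0 hk0 {hmax hC} => // k' _; exists k'.
subst k0.
have [[h1 h2] h3] := hC.
have [hC1 hIC1] := h1 1%nat hk0.
have hC1J := h3 1%nat hk0.
have [hC01 hnC10] := h2 0%nat hk0.
have hIC0 := (h1 0%nat (leq0n _)).2.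
have hnC1I : ~ subideal (C 1%nat) I.
  by move=> h; apply: hnC10 => x hx; apply: hIC0; apply: h.
have hmin : forall K', is_ideal K' -> subideal I K' -> subideal K' (C 1%nat) ->
    ~ subideal K' I -> subideal (C 1%nat) K'.
  move=> K' hK' hIK' hK'C hK'I; apply: NNPP => hCK.
  have hs := bchain_shift hC.
  have hs2 : bchain I J k0'.+1 (preC K' (fun i => C i.+1)).
    apply: bchain_pre => //; by move=> x hx; apply: hC1J; apply: hK'C.
  have hs3 : bchain I J k0'.+2 (preC I (preC K' (fun i => C i.+1))).
    by apply: bchain_pre.

  by have := hmax _ (ex_intro _ _ hs3); rewrite ltnn.
have [y [hyC hyI]] := not_sub_ex hnC1I.
have hKx : subideal (C 1%nat) (cyc I y).
  apply: hmin; first exact: cyc_ideal.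
  - by move=> x hx; exists x, 0; rewrite mul0r addr0.
  - move=> z [c [a [hc ->]]]; apply: idlD => //; first by apply: hIC1.
    exact: idlM.
  - by move=> h; apply: hyI; apply: h; exists 0, 1; rewrite mul1r add0r; split=> //; apply: idl0.
have hmy : forall a, m a -> I (a * y).
  have hm' := hm; case: hm' => [hmi _].
  pose Km := fun z => exists c a, I c /\ m a /\ z = c + a * y.
  have hKm : is_ideal Km.
    split; first by exists 0, 0; rewrite mul0r addr0; split; [apply: idl0|split; [apply: idl0|]].
    split.
      move=> u v [a [b [ha [hb ->]]]] [c [d [hc [hd ->]]]].
      exists (a + c), (b + d); split; first exact: idlD.
      by split; [exact: idlD|rewrite mulrDl addrACA].
    move=> r u [a [b [ha [hb ->]]]]; exists (r * a), (r * b).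
    by split; [exact: idlM|split; [exact: idlM|rewrite mulrDr mulrA]].
  case: (classic (subideal Km I)) => hKmI.
    by move=> a ha; apply: hKmI; exists 0, a; rewrite add0r; split=> //; apply: idl0.
  exfalso.
  have hCKm : subideal (C 1%nat) Km.
    apply: hmin => //.
      by move=> x hx; exists x, 0; rewrite mul0r addr0; split=> //; split=> //; apply: idl0.
    move=> z [c [a [hc [ha ->]]]]; apply: idlD => //; first by apply: hIC1.
    exact: idlM.
  move: hCKm.
  move=> /(_ y hyC) [c [a [hc [ha ey]]]].
  apply: hyI; apply: (unit_out hm hI ha).
  by rewrite {1}ey addrK.
have hC1Jn : lenle (C 1%nat) J n.
  exact: (lenle_pre hI hC1 hIC1 hnC1I hC1J hl).
have IH1 := IH _ _ hC1 hJ hC1J hC1Jn.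
have hTI := ext_ideal_ideal psi I.
have hTC := ext_ideal_ideal psi (C 1%nat).
have hTJ := ext_ideal_ideal psi J.
have hcyc : lenle (ext_ideal psi I) (ext_ideal psi (C 1%nat)) L.
  apply: (lenle_cyc (N := ext_ideal psi m) (x := psi y)) => //.
  - exact: ext_ideal_ideal.
  - apply: (ext_ideal_min (J := colon (ext_ideal psi I) (psi y))).
      exact: colon_ideal.
    move=> a ha; rewrite /colon -hmul; apply: ext_ideal_gen; exact: hmy.
  - apply: ext_ideal_min; first exact: cyc_ideal.
    move=> z /hKx [c [a [hc ->]]].
    by exists (psi c), (psi a); rewrite hadd hmul; split=> //; apply: ext_ideal_gen.
rewrite mulSn; apply: (lenle_add hTI hTC hTJ) => //.
- by apply: ext_ideal_mono.
- by apply: ext_ideal_mono.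
Qed.

End Main5.

Section Fin.
Implicit Types (A B : comNzRingType).

Lemma noeth_max A (F : (A -> Prop) -> Prop) : noetherian A ->
  (forall X, F X -> is_ideal X) -> (exists X, F X) ->
  exists X, F X /\ forall Y, F Y -> subideal X Y -> subideal Y X.
Proof.
move=> hN hFI [X0 hX0]; apply: NNPP => hno.
have hstep : forall X, exists Y, F X -> F Y /\ subideal X Y /\ ~ subideal Y X.
  move=> X; case: (classic (F X)) => hX; last by exists X.
  apply: NNPP => hn; apply: hno; exists X; split=> // Y hY hXY.
  apply: NNPP => hYX; apply: hn; exists Y => _; by split.
pose g X := proj1_sig (constructive_indefinite_description _ (hstep X)).
have hg : forall X, F X -> F (g X) /\ subideal X (g X) /\ ~ subideal (g X) X.
  by move=> X; rewrite /g; case: constructive_indefinite_description.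
pose J n := iter n g X0.
have hJF : forall n, F (J n) by elim=> [|n IH] //=; exact: (hg _ IH).1.
have [N hNst] := hN J (fun n => hFI _ (hJF n)) (fun n => (hg _ (hJF n)).2.1).
have [_ [_ hns]] := hg _ (hJF N).
apply: hns => x hx; exact: (hNst N.+1 (leqnSn N) x).1.
Qed.

Lemma lenle_m1 A (m : A -> Prop) : local_ring m -> lenle m (@fullI A) 1.
Proof.
move=> [hmi [hm1 hu]] [|[|k]] C [[h1 h2] h3] //.
have [hs1 hns1] := h2 0%nat isT.
have [hs2 hns2] := h2 1%nat isT.
have [y [hy1 hy0]] := not_sub_ex hns1.
have hym : ~ m y by move=> h; apply: hy0; apply: (h1 0%nat isT).2.
have [u hu'] := hu _ hym.
have hC1 := (h1 1%nat isT).1.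
exfalso; apply: hns2 => x _; apply: idl1 => //.
by rewrite -hu'; apply: idlMr hC1 hy1.
Qed.

Lemma fin_len A (m q : A -> Prop) : noetherian A -> local_ring m -> is_ideal q ->
  (forall x, m x -> exists k : nat, q (x ^+ k)) -> exists L, lenle q (@fullI A) L.
Proof.
move=> hN hm hq hrad; apply: NNPP => hno.
have [I [[hI [hqI hIno]] hImax]] :=
  noeth_max (F := fun X => is_ideal X /\ subideal q X /\ ~ exists L, lenle X (@fullI A) L)
     hN (fun X h => h.1) (ex_intro _ q (conj hq (conj (fun x h => h) hno))).
have hI1 : ~ I 1.
  by move=> h; apply: hIno; exists 0%nat; apply: lenle_triv => x _; apply: idl1.
have [P [[z0 [hz0 eP]] hPmax]] :=
  noeth_max (F := fun P => exists z, ~ I z /\ P = colon I z) hN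
    (fun X '(ex_intro z (conj _ e)) => eq_ind_r _ (colon_ideal z hI) e)
    (ex_intro _ _ (ex_intro _ 1 (conj hI1 erefl))).
subst P.
have hprime : forall a b, colon I z0 (a * b) -> ~ colon I z0 a -> colon I z0 b.
  move=> a b hab ha.
  have hsub : subideal (colon I z0) (colon I (a * z0)).
    by move=> c hc; rewrite /colon mulrCA; apply: idlM.
  apply: (hPmax _ (ex_intro _ (a * z0) (conj ha erefl)) hsub).
  by rewrite /colon mulrCA mulrA.
have hpow : forall x k, colon I z0 (x ^+ k) -> colon I z0 x.
  move=> x; elim=> [|k IH]; first by rewrite /colon expr0 mul1r.
  rewrite exprS => h; case: (classic (colon I z0 x)) => hx //.
  exact: IH (hprime _ _ h hx).
have hmz : forall a, m a -> I (a * z0).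
  move=> a ha; have [k hk] := hrad _ ha; apply: (hpow a k).
  rewrite /colon; apply: idlMr => //; exact: hqI.
have hI' := cyc_ideal z0 hI.
have hII' : subideal I (cyc I z0) by move=> x hx; exists x, 0; rewrite mul0r addr0.
have hnI' : ~ subideal (cyc I z0) I.
  move=> h; apply: hz0; apply: h; exists 0, 1; rewrite mul1r add0r; split=> //; exact: idl0.
have [L hL] : exists L, lenle (cyc I z0) (@fullI A) L.
  apply: NNPP => hn; apply: hnI'; apply: hImax => //; split=> //; split=> //.
  by move=> x hx; apply: hII'; apply: hqI.
apply: hIno; exists (1 + L)%nat.
apply: (lenle_add hI hI' (@full_ideal A)) => //.
apply: (lenle_cyc (N := m) (x := z0)) => //.
- by case: hm.
- exact: lenle_m1.
Qed.

End Fin.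

Section Phi.
Implicit Types (A B : comNzRingType).

Lemma rad_ideal A (q : A -> Prop) : is_ideal q -> is_ideal (radical q).
Proof.
move=> hq; split; first by exists 1%nat; rewrite expr1; apply: idl0.
split.
  move=> x y [a ha] [b hb]; exists (a + b)%nat; rewrite exprDn.
  apply: (big_ind q (idl0 hq) (fun u v => idlD hq)) => i _.
  rewrite -mulr_natr; apply: idlMr => //.
  case: (leqP b i) => hbi.
    have -> : y ^+ i = y ^+ (i - b) * y ^+ b by rewrite -exprD subnK.
    by rewrite mulrA; apply: idlM.
  have -> : x ^+ (a + b - i) = x ^+ (a + b - i - a) * x ^+ a.
    by rewrite -exprD subnK //; lia.
  by apply: idlMr => //; apply: idlM.
by move=> r x [k hk]; exists k; rewrite exprMn; apply: idlM.
Qed.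

Lemma iter_add A (phi : {rmorphism A -> A}) n x y :
  iter n phi (x + y) = iter n phi x + iter n phi y.
Proof. by elim: n => //= n ->; rewrite rmorphD. Qed.
Lemma iter_mul A (phi : {rmorphism A -> A}) n x y :
  iter n phi (x * y) = iter n phi x * iter n phi y.
Proof. by elim: n => //= n ->; rewrite rmorphM. Qed.
Lemma iter_one A (phi : {rmorphism A -> A}) n : iter n phi 1 = 1.
Proof. by elim: n => //= n ->; rewrite rmorph1. Qed.
Lemma iter_zero A (phi : {rmorphism A -> A}) n : iter n phi 0 = 0.
Proof. by elim: n => //= n ->; rewrite rmorph0. Qed.

Lemma preim_ideal A (f : A -> A) (J : A -> Prop) :
  (forall x y, f (x + y) = f x + f y) -> (forall x y, f (x * y) = f x * f y) ->
  f 0 = 0 -> is_ideal J -> is_ideal (fun z => J (f z)).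
Proof.
move=> hadd hmul h0 hJ; split; first by rewrite h0; apply: idl0.
split; first by move=> x y hx hy; rewrite hadd; apply: idlD.
by move=> r x hx; rewrite hmul; apply: idlM.
Qed.

Lemma ext_comp A (phi : {rmorphism A -> A}) (m : A -> Prop) a b :
  subideal (ext_ideal (iter a phi) (ext_ideal (iter b phi) m)) (ext_ideal (iter (a + b) phi) m).
Proof.
apply: ext_ideal_min; first exact: ext_ideal_ideal.
move=> z hz.
have hP : is_ideal (fun z => ext_ideal (iter (a + b) phi) m (iter a phi z)).
  apply: preim_ideal; [exact: iter_add|exact: iter_mul|exact: iter_zero|exact: ext_ideal_ideal].
apply: (@ext_ideal_min _ _ (iter b phi) m _ hP _ z hz) => y hy /=.
by rewrite -iterD; apply: ext_ideal_gen.
Qed.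

Lemma ext_full A (f : A -> A) : f 1 = 1 -> subideal (@fullI A) (ext_ideal f (@fullI A)).
Proof.
move=> h1 x _; apply: (idl1 (I := ext_ideal f (@fullI A))); first exact: ext_ideal_ideal.
by rewrite -h1; exact: (@ext_ideal_gen _ _ f (@fullI A) 1 Logic.I).
Qed.

Lemma submult A (phi : {rmorphism A -> A}) (m : A -> Prop) a b La Lb :
  local_ring m ->
  lenle (ext_ideal (iter a phi) m) (@fullI A) La ->
  lenle (ext_ideal (iter b phi) m) (@fullI A) Lb ->
  lenle (ext_ideal (iter (a + b) phi) m) (@fullI A) (Lb * La).
Proof.
move=> hm ha hb.
have := main5 hm (@iter_add _ phi a) (@iter_mul _ phi a) ha (ext_ideal_ideal _ _)
  (@full_ideal A) (fun x _ => I) hb.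
apply: lenle_mono; first exact: ext_comp.
exact: ext_full (iter_one phi a).
Qed.

Lemma fin_len_all A (phi : {rmorphism A -> A}) (m : A -> Prop) :
  noetherian A -> local_ring m -> finite_length_hom m m phi ->
  forall n, exists L, lenle (ext_ideal (iter n phi) m) (@fullI A) L.
Proof.
move=> hN hm [hloc [_ hrad]].
have [L1 hL1] : exists L, lenle (ext_ideal (iter 1 phi) m) (@fullI A) L.
  apply: (fin_len hN hm (ext_ideal_ideal _ _)) => x hx.
  exact: (hrad x).2.
elim=> [|n [L hL]].
  exists 1%nat; apply: (lenle_mono _ _ (lenle_m1 hm)); last by move=> x.
  by move=> x hx; exact: (@ext_ideal_gen _ _ (iter 0 phi) m x hx).
by exists (L * L1)%nat; rewrite -add1n; apply: submult.
Qed.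

Lemma qn_sub_m A (phi : {rmorphism A -> A}) (m : A -> Prop) n :
  local_ring m -> local_hom m m phi -> subideal (ext_ideal (iter n phi) m) m.
Proof.
move=> [hmi _] hloc; apply: ext_ideal_min => // y hy.
by elim: n => //= n IH; apply: hloc.
Qed.

Lemma rad_all A (phi : {rmorphism A -> A}) (m : A -> Prop) :
  local_ring m -> finite_length_hom m m phi ->
  forall n x, m x -> radical (ext_ideal (iter n phi) m) x.
Proof.
move=> hm [hloc [_ hrad]]; elim=> [|n IH] x hx.
  by exists 1%nat; rewrite expr1; exact: (@ext_ideal_gen _ _ (iter 0 phi) m x hx).
have hR := rad_ideal (ext_ideal_ideal (iter n.+1 phi) m).
have hq1 : subideal (ext_ideal phi m) (radical (ext_ideal (iter n.+1 phi) m)).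
  apply: ext_ideal_min => // y hy.
  have [k hk] := IH y hy; exists k; rewrite -rmorphXn.
  apply: (ext_ideal_min (J := fun z => ext_ideal (iter n.+1 phi) m (phi z))) hk.
    apply: preim_ideal; [exact: rmorphD|exact: rmorphM|exact: rmorph0|exact: ext_ideal_ideal].
  by move=> w hw; exact: (@ext_ideal_gen _ _ (iter n.+1 phi) m w hw).
have [k hk] := (hrad x).2 hx.
have [j hj] := hq1 _ hk.
by exists (k * j)%nat; rewrite exprM.
Qed.

Lemma fl_all A (phi : {rmorphism A -> A}) (m : A -> Prop) :
  local_ring m -> finite_length_hom m m phi ->
  forall n, finite_length_hom m m (iter n phi).
Proof.
move=> hm hphi n; have hphi' := hphi; case: hphi' => [hloc _].
have [hmi [hm1 hu]] := hm.
have hsub := qn_sub_m (phi:=phi) (n:=n) hm hloc.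
split.
  by move=> x hx; elim: n {hsub} => //= n IH; apply: hloc.
have hq := ext_ideal_ideal (iter n phi) m.
have hrd : forall x, radical (ext_ideal (iter n phi) m) x <-> m x.
  move=> x; split; last exact: rad_all.
  move=> [k hk]; apply: NNPP => hx; have [u hu'] := hu _ hx.
  apply: hm1; rewrite -(expr1n _ k) -hu' exprMn; apply: idlMr => //.
  exact: hsub.
split=> //; split=> //; split.
  by move=> h; apply: hm1; apply: hsub.
move=> x y hxy hx; case: (classic (m y)) => hy.
  by have [k hk] := (hrd y).2 hy; exists k.
exfalso; have [u hu'] := hu _ hy; apply: hx.
by rewrite -(mulr1 x) -hu' mulrA; exact: (idlMr (I := ext_ideal (iter n phi) m) u hq hxy).
Qed.

End Phi.

End AllAlg.

From HB Require Import structures.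
From mathcomp Require Import all_boot all_algebra.
From Stdlib Require Import Reals.

Theorem mainTheorem1 (A : comNzRingType) (m : A -> Prop)
  (hA : noetherian_local m)
  (phi : {rmorphism A -> A})
  (hphi : finite_length_hom m m phi) :
  (forall n : nat, (0 < n)%N ->
     finite_length_hom m m (iter n phi) ) /\
  exists lam : nat -> nat,
    (forall n : nat, (0 < n)%N ->
       quot_length (ext_ideal (iter n phi) m) (lam n)) /\
    exists l : R,
      Un_cv (fun k : nat => Rdiv (ln (INR (lam k.+1))) (INR k.+1)) l /\
      is_inf (fun x : R => exists n : nat, (0 < n)%N /\
                 x = Rdiv (ln (INR (lam n))) (INR n)) l.
Proof.
have [hN hm] := hA.
split; first by move=> n _; apply: fl_all.
pose q n := ext_ideal (iter n phi) m.
have hqc : forall I k C, quot_chain I k C -> bchain I (@fullI A) k C.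
  by move=> I k C h; split=> // i _ x.
have hex : forall n, exists k, (exists C, quot_chain (q n) k C) /\
    forall j, (exists C, quot_chain (q n) j C) -> (j <= k)%N.
  move=> n; have [L hL] := fin_len_all hN hm hphi n.
  apply: (max_nat (n := L)).
    exists 0%N, (fun _ => q n); split; last by move=> i.
    move=> i _; split; first exact: ext_ideal_ideal.
    by move=> x.
  by move=> k [C hC]; apply: (hL k C); apply: hqc.
pose lam n := proj1_sig (constructive_indefinite_description _ (hex n)).
have hlam : forall n, (exists C, quot_chain (q n) (lam n) C) /\
    forall j, (exists C, quot_chain (q n) j C) -> (j <= lam n)%N.
  by move=> n; rewrite /lam; case: constructive_indefinite_description.
have hlen : forall n, lenle (q n) (@fullI A) (lam n).
  by move=> n k C [hC _]; apply: (hlam n).2; exists C.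
have [hmi [hm1 _]] := hm.
have hpos : forall n, (1 <= lam n)%N.
  move=> n; apply: (hlam n).2.
  have hq1 : ~ q n (GRing.one A) by move=> h; apply: hm1; apply: (qn_sub_m (n := n) hm hphi.1).
  exists (fun i => if i is 0%N then q n else @fullI A).
  have := bchain2 (ext_ideal_ideal (iter n phi) m) (@full_ideal A) (fun x _ => Logic.I)
     (fun h => hq1 (h (GRing.one A) Logic.I)).
  by case.
have hsub : forall a b, (lam (a + b) <= lam a * lam b)%N.
  move=> a b; have [[C hC] _] := hlam (a + b)%N.
  rewrite mulnC; apply: (submult hm (hlen a) (hlen b)).
  exact: hqc hC.
have [l [hcv [hi1 hi2]]] := fekete lam
   (fun n _ => (elimT leP (hpos n)))
   (fun a b _ _ => (elimT leP (hsub a b))).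
exists lam; split; first by move=> n _; have [h1 h2] := hlam n; split=> // k J hJ; apply: h2; exists J.
exists l; split; first exact: hcv.
split.
  move=> x [n [hn ->]]; apply: hi1; exists n; split=> //; exact/ltP.
move=> b hb; apply: hi2 => x [n [hn ->]]; apply: hb; exists n; split=> //; exact/ltP.
Qed.
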